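(* For all integers $s\geq 2$ and $r\geq 1$, $$\sum_{i=1}^{s-2}2^{i-1}\binom{2r+i-1}{i}\sigma(s-i,2r+i)+2^{s-1}\sum_{j=0}^{2r-2}(-1)^j\binom{s+j-1}{j}\lambda(s+j)\lambda(2r-j)$$ $$-2^{s-2}\binom{s+2r-2}{s-1}\sum_{p\geq 1}\frac{H_p}{(2p+1)^{s+2r-1}}-2^{s-1}\binom{s+2r-2}{s-1}\lambda(s+2r-1)\ln 2=0,$$ where an empty sum equals $0$.
   Context: $H_p=1+\frac12+\cdots+\frac1p$. For integers $t\geq 1$, $n\geq 1$ let $S_n^{(t)}=\sum_{k=1}^{n}\frac{1}{(2k-1)^t}$, and for integers $s\geq 2$, $t\geq 1$ let $\sigma(s,t)=\sum_{n\geq 1}\frac{S_n^{(t)}}{n^s}$. For real $s>1$, $\lambda(s)=\sum_{n\geq 1}\frac{1}{(2n-1)^s}$. *)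

(* Defs.v *)
From Stdlib Require Import Reals.
From Coquelicot Require Import Coquelicot.
Open Scope R_scope.

Fixpoint fsum (n : nat) (f : nat -> R) : R :=
  match n with
  | O => 0
  | S m => fsum m f + f m
  end.

Definition Hn (p : nat) : R := fsum p (fun k => / INR (k + 1)).

Definition Sodd (n t : nat) : R :=
  fsum n (fun k => / (2 * INR (k + 1) - 1) ^ t).

Definition sigma_st (s t : nat) : R :=
  Series (fun n => Sodd (n + 1) t / INR (n + 1) ^ s).

Definition lambda_odd (s : nat) : R :=
  Series (fun n => / (2 * INR (n + 1) - 1) ^ s).

(* Main.v *)
Require Import Defs.
From Stdlib Require Import Reals Lra Lia.
From Coquelicot Require Import Coquelicot.
Open Scope R_scope.

Lemma ser_lim a l : is_series a l <-> is_lim_seq (fun n => sum_f_R0 a n) l.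
Proof.
  split; intro H.
  - apply (is_lim_seq_ext (sum_n a)). intro; apply sum_n_Reals. exact H.
  - apply (is_lim_seq_ext _ (sum_n a)) in H. exact H. intro; symmetry; apply sum_n_Reals.
Qed.

Lemma fsum_ext n f g : (forall j, (j < n)%nat -> f j = g j) -> fsum n f = fsum n g.
Proof. induction n; simpl; intros H; auto. rewrite IHn by (intros; apply H; lia). rewrite H by lia. auto. Qed.

Lemma fsum_plus n f g : fsum n (fun j => f j + g j) = fsum n f + fsum n g.
Proof. induction n; simpl; [lra|]. rewrite IHn; lra. Qed.

Lemma fsum_scal n c f : fsum n (fun j => c * f j) = c * fsum n f.
Proof. induction n; simpl; [lra|]. rewrite IHn; lra. Qed.

Lemma fsum_shift n f : fsum (S n) f = f O + fsum n (fun j => f (S j)).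
Proof. induction n; simpl in *; [lra|]. rewrite IHn; lra. Qed.

Lemma fsum_sumf n f : fsum (S n) f = sum_f_R0 f n.
Proof. induction n; simpl in *; [lra|]. rewrite <- IHn. simpl. lra. Qed.

Lemma fsum_add n m f : fsum (n + m) f = fsum n f + fsum m (fun j => f (n + j)%nat).
Proof. induction m; simpl. rewrite Nat.add_0_r; lra. rewrite Nat.add_succ_r. simpl. rewrite IHm. lra. Qed.

Lemma sum_fsum_swap N m F :
  sum_f_R0 (fun k => fsum m (fun j => F j k)) N = fsum m (fun j => sum_f_R0 (F j) N).
Proof.
  induction m; simpl.
  - induction N; simpl; [lra|]. rewrite IHN; lra.
  - rewrite sum_plus. rewrite IHm. lra.
Qed.

Lemma sum_scal_l N c f : sum_f_R0 (fun k => c * f k) N = c * sum_f_R0 f N.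
Proof. rewrite scal_sum. apply sum_eq; intros; lra. Qed.

Lemma is_series_fsum m F L :
  (forall j, (j < m)%nat -> is_series (F j) (L j)) ->
  is_series (fun n => fsum m (fun j => F j n)) (fsum m L).
Proof.
  induction m; intros H; simpl.
  - apply (is_series_ext (fun _ => 0)). auto.
    apply ser_lim. apply (is_lim_seq_ext (fun _ => 0)).
    intro n; induction n; simpl; lra. apply is_lim_seq_const.
  - apply (is_series_plus (fun n => fsum m (fun j => F j n)) (F m)).
    apply IHm; intros; apply H; lia. apply H; lia.
Qed.

Lemma sum_rev n f : sum_f_R0 (fun k => f (n - k)%nat) n = sum_f_R0 f n.
Proof.
  induction n.
  - simpl. auto.
  - rewrite decomp_sum by lia. simpl pred. rewrite Nat.sub_0_r.
    rewrite (sum_eq _ (fun k => f (n - k)%nat)) by (intros; f_equal).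
    rewrite IHn. simpl. lra.
Qed.


Lemma pow_succ x n : x ^ S n = x * x ^ n.
Proof. reflexivity. Qed.

Definition Apf (u w : R) (P Q : nat) : R :=
  fsum (S P) (fun j => Binomial.C (Q + j) j * / (u ^ (S P - j) * w ^ (S Q + j))).

Lemma Apf_zeroP u w Q : Apf u w 0 Q = / (u * w ^ (S Q)).
Proof. unfold Apf. simpl. rewrite Nat.add_0_r, C_n_0. simpl. rewrite Rmult_1_r. lra. Qed.

Lemma Apf_zeroQ_step v w Q : v <> 0 -> w <> 0 ->
  Apf v w (S Q) 0 = / (v ^ (S (S Q)) * w) + / w * Apf v w Q 0.
Proof.
  intros Hv Hw. unfold Apf. rewrite fsum_shift. rewrite C_n_0.
  replace (S (S Q) - 0)%nat with (S (S Q)) by lia.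
  rewrite <- fsum_scal. f_equal. simpl. rewrite Rmult_1_r. lra.
  apply fsum_ext. intros j Hj. simpl (0 + S j)%nat. simpl (0 + j)%nat.
  rewrite !C_n_n. replace (S (S Q) - S j)%nat with (S Q - j)%nat by lia.
  replace (S 0 + S j)%nat with (S (S j)) by lia. replace (S 0 + j)%nat with (S j) by lia.
  rewrite (pow_succ w (S j)). rewrite !Rinv_mult. lra.
Qed.

Lemma pf_base u v w Q : u <> 0 -> v <> 0 -> w <> 0 -> w = u + v ->
  / (u * v ^ (S Q)) = Apf u w 0 Q + Apf v w Q 0.
Proof.
  intros Hu Hv Hw Hwuv. induction Q.
  - rewrite !Apf_zeroP. subst w. simpl. field. split; auto.
  - rewrite Apf_zeroQ_step by auto. rewrite !Apf_zeroP in *.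
    assert (E : Apf v w Q 0 = / (u * v ^ S Q) - / (u * w ^ S Q)) by lra.
    rewrite E. remember (S Q) as q. 
    assert (Vq : v ^ q <> 0) by (apply pow_nonzero; auto).
    assert (Wq : w ^ q <> 0) by (apply pow_nonzero; auto).
    simpl. subst w. field. repeat split; auto.
Qed.

Lemma Apf_rec u w P Q : u <> 0 -> w <> 0 ->
  Apf u w (S P) (S Q) = / w * (Apf u w P (S Q) + Apf u w (S P) Q).
Proof.
  intros Hu Hw. unfold Apf.
  rewrite (fsum_shift (S P)). rewrite (fsum_shift (S P) (fun j => Binomial.C (Q + j) j * _)).
  rewrite !C_n_0. rewrite !Nat.add_0_r. rewrite !Nat.sub_0_r.
  assert (T : forall j, (j < S P)%nat ->
     Binomial.C (S Q + S j) (S j) * / (u ^ (S (S P) - S j) * w ^ (S (S Q) + S j)) =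
     / w * (Binomial.C (S Q + j) j * / (u ^ (S P - j) * w ^ (S (S Q) + j))) +
     / w * (Binomial.C (Q + S j) (S j) * / (u ^ (S (S P) - S j) * w ^ (S Q + S j)))).
  { intros j Hj. replace (S (S P) - S j)%nat with (S P - j)%nat by lia.
    replace (Q + S j)%nat with (S Q + j)%nat by lia.
    replace (S Q + S j)%nat with (S (S Q + j)) by lia.
    rewrite <- pascal by lia.
    replace (S (S Q) + S j)%nat with (S (S (S Q) + j)) by lia.
    replace (S (S Q) + j)%nat with (S (S Q + j)) by lia.
    replace (S Q + S j)%nat with (S (S Q + j)) by lia.
    rewrite (pow_succ w (S (S Q + j))).
    assert (U : u ^ (S P - j) <> 0) by (apply pow_nonzero; auto).
    assert (W : w ^ (S (S Q + j)) <> 0) by (apply pow_nonzero; auto).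
    field. auto. }
  rewrite (fsum_ext _ _ _ T). rewrite fsum_plus, !fsum_scal.
  rewrite (pow_succ w (S Q)).
  assert (U : u ^ S (S P) <> 0) by (apply pow_nonzero; auto).
  assert (W : w ^ (S Q) <> 0) by (apply pow_nonzero; auto).
  replace (/ (u ^ S (S P) * w ^ S Q)) with (w * / (u ^ S (S P) * (w * w ^ S Q))) by (field; auto).
  field; auto.
Qed.

Lemma pf u v w P Q : u <> 0 -> v <> 0 -> w <> 0 -> w = u + v ->
  / (u ^ (S P) * v ^ (S Q)) = Apf u w P Q + Apf v w Q P.
Proof.
  intros Hu Hv Hw Hwuv. revert Q. induction P as [|P IHP]; intro Q.
  - rewrite <- pf_base by auto. simpl. rewrite Rmult_1_r. auto.
  - induction Q as [|Q IHQ].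
    + rewrite Rplus_comm. rewrite <- pf_base by (auto; lra). simpl. rewrite Rmult_1_r. f_equal. lra.
    + rewrite Apf_rec by auto. rewrite (Apf_rec v) by auto.
      match goal with |- _ = ?R => replace R with
        (/ w * ((Apf u w P (S Q) + Apf v w (S Q) P) + (Apf u w (S P) Q + Apf v w Q (S P)))) by ring end.
      rewrite <- (IHP (S Q)). rewrite <- IHQ.
      assert (U : u ^ S P <> 0) by (apply pow_nonzero; auto).
      assert (V : v ^ S Q <> 0) by (apply pow_nonzero; auto).
      rewrite (pow_succ u (S P)), (pow_succ v (S Q)). subst w.
      field. repeat split; auto.
Qed.

Lemma pow_opp' x n : (- x) ^ n = (-1) ^ n * x ^ n.
Proof. induction n; simpl; [lra|]. rewrite IHn. ring. Qed.

Lemma m1_pow_sq j : (-1) ^ j * (-1) ^ j = 1.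
Proof. rewrite <- Rpow_mult_distr. replace (-1 * -1) with 1 by ring. apply pow1. Qed.

Lemma m1_even_sub X j : (-1) ^ X = 1 -> (j <= X)%nat -> (-1) ^ (X - j) = (-1) ^ j.
Proof.
  intros HX Hj. replace X with ((X - j) + j)%nat in HX by lia. rewrite pow_add in HX.
  rewrite <- (Rmult_1_r ((-1) ^ (X - j))). rewrite <- (m1_pow_sq j).
  rewrite <- Rmult_assoc, HX. ring.
Qed.

Lemma pair_id a b c s' q : 0 < a -> 0 < b -> c = a + b -> (-1) ^ (S q) = 1 ->
  / (a ^ (S q) * c ^ (S s')) = Apf c b s' q +
    fsum (S q) (fun j => (-1) ^ j * Binomial.C (s' + j) j * / (a ^ (S q - j) * b ^ (S s' + j))).
Proof.
  intros Ha Hb Hc Hq.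
  assert (H := pf c (- a) b s' q ltac:(lra) ltac:(lra) ltac:(lra) ltac:(lra)).
  rewrite pow_opp', Hq, Rmult_1_l, Rmult_comm in H. rewrite H. f_equal.
  unfold Apf. apply fsum_ext. intros j Hj.
  rewrite pow_opp'. rewrite m1_even_sub by (auto; lia).
  assert ((-1) ^ j <> 0) by (apply pow_nonzero; lra).
  assert (a ^ (S q - j) <> 0) by (apply pow_nonzero; lra).
  assert (b ^ (S s' + j) <> 0) by (apply pow_nonzero; lra).
  assert (E : / ((-1) ^ j) = (-1) ^ j).
  { rewrite <- (Rmult_1_l (/ _)), <- (m1_pow_sq j). field. auto. }
  rewrite !Rinv_mult, E. ring.
Qed.


Definition oddR (k : nat) : R := 2 * INR k + 1.
Definition cN (n : nat) : R := 2 * INR n + 2.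
Definition Td (x y n : nat) : R := sum_f_R0 (fun k => / (oddR k ^ x * oddR (n - k) ^ y)) n.
Definition Ud (x y n : nat) : R := sum_f_R0 (fun k => / (oddR k ^ x * cN n ^ y)) n.

Lemma oddR_pos k : 0 < oddR k.
Proof. unfold oddR. pose proof (pos_INR k). lra. Qed.
Lemma cN_pos n : 0 < cN n.
Proof. unfold cN. pose proof (pos_INR n). lra. Qed.

Lemma cN_split n k : (k <= n)%nat -> cN n = oddR k + oddR (n - k).
Proof. intros. unfold cN, oddR. rewrite minus_INR by auto. lra. Qed.

Lemma Td_swap x y n : Td x y n = Td y x n.
Proof.
  unfold Td. rewrite <- sum_rev. apply sum_eq. intros k Hk.
  replace (n - (n - k))%nat with k by lia. rewrite Rmult_comm. auto.
Qed.

Lemma diag_id s' q n : (-1) ^ (S q) = 1 ->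
  Ud (S q) (S s') n =
  fsum (S s') (fun i => Binomial.C (q + i) i * Ud (S q + i) (S s' - i) n) +
  fsum (S q) (fun j => (-1) ^ j * Binomial.C (s' + j) j * Td (S q - j) (S s' + j) n).
Proof.
  intros Hq. unfold Ud at 1.
  rewrite (sum_eq _ (fun k => Apf (cN n) (oddR (n - k)) s' q +
    fsum (S q) (fun j => (-1) ^ j * Binomial.C (s' + j) j *
       / (oddR k ^ (S q - j) * oddR (n - k) ^ (S s' + j))))).
  2:{ intros k Hk. apply pair_id; auto using oddR_pos. apply cN_split; auto. }
  rewrite sum_plus. f_equal.
  - unfold Apf. rewrite sum_fsum_swap. apply fsum_ext. intros i Hi.
    rewrite sum_scal_l. f_equal. unfold Ud.
    rewrite <- sum_rev. apply sum_eq. intros k Hk. replace (n - (n - k))%nat with k by lia.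
    rewrite Rmult_comm. auto.
  - rewrite sum_fsum_swap. apply fsum_ext. intros j Hj.
    rewrite sum_scal_l. auto.
Qed.

Definition gE (K p m : nat) : R := / oddR p ^ K * (/ oddR m - / (2 * INR p + 2 * INR m + 2)).

Lemma E_id K n : Ud K 1 n - Td K 1 n = - sum_f_R0 (fun k => gE K k (n - k)) n.
Proof.
  unfold Ud, Td. rewrite <- minus_sum.
  replace (- sum_f_R0 (fun k => gE K k (n - k)) n) with (-1 * sum_f_R0 (fun k => gE K k (n - k)) n) by ring.
  rewrite <- sum_scal_l. apply sum_eq. intros k Hk. unfold gE.
  rewrite (cN_split n k Hk).
  pose proof (oddR_pos k). pose proof (oddR_pos (n - k)). unfold oddR in *.
  rewrite minus_INR in * by auto.
  assert ((2 * INR k + 1) ^ K <> 0) by (apply pow_nonzero; lra).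
  simpl. field. repeat split; lra.
Qed.


Lemma tele_sum F n : sum_f_R0 (fun k => F (S k) - F k) n = F (S n) - F O.
Proof. induction n; simpl; [lra|]. rewrite IHn. lra. Qed.

Lemma INR_S1 n : INR (n + 1) = INR n + 1.
Proof. rewrite plus_INR. simpl. lra. Qed.

Lemma ex_series_le_R (a b : nat -> R) :
  (forall n, 0 <= a n <= b n) -> ex_series b -> ex_series a.
Proof.
  intros H Hb. apply (@ex_series_le R_AbsRing R_CompleteNormedModule _ b); auto.
  intro n. change (Rabs (a n) <= b n). rewrite Rabs_pos_eq; apply H.
Qed.

Lemma ex_series_inv_sq : ex_series (fun n => / INR (n + 1) ^ 2).
Proof.
  apply (ex_series_le_R _ (fun n => 2 * (/ INR (n + 1) - / INR (S n + 1)))).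
  - intros n. split.
    { apply Rlt_le, Rinv_0_lt_compat, pow_lt. rewrite INR_S1. pose proof (pos_INR n); lra. }
    rewrite !INR_S1, S_INR. pose proof (pos_INR n).
    set (t := INR n + 1). assert (1 <= t) by (unfold t; lra).
    replace (2 * (/ t - / (t + 1))) with (/ (t * (t + 1) / 2)) by (field; lra).
    apply Rinv_le_contravar. apply Rmult_lt_0_compat; [|lra]. apply Rmult_lt_0_compat; lra.
    simpl. nra.
  - exists 2. apply ser_lim.
    apply (is_lim_seq_ext (fun n => 2 - 2 * / INR (S n + 1))).
    + intro n. rewrite sum_scal_l.
      rewrite (sum_eq _ (fun k => -1 * ((fun m => / INR (m + 1)) (S k) - (fun m => / INR (m + 1)) k))).
      2:{ intros; simpl; ring. }
      rewrite sum_scal_l, (tele_sum (fun m => / INR (m + 1))). cbv beta. replace (INR (0 + 1)) with 1 by (simpl; lra).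
      rewrite Rinv_1. ring.
    + assert (HH : is_lim_seq (fun n => 2 - 2 * / INR (S n + 1)) (2 - 2 * 0)).
      2:{ replace (2 - 2 * 0) with 2 in HH by ring. exact HH. }
      apply is_lim_seq_minus'. apply is_lim_seq_const.
      apply (is_lim_seq_scal_l _ 2 0).
      replace (Finite 0) with (Rbar_inv p_infty) by reflexivity.
      apply is_lim_seq_inv; [|discriminate].
      apply (is_lim_seq_ext (fun n => INR n + 2)). intro; rewrite INR_S1, S_INR; ring.
      apply (is_lim_seq_plus _ _ p_infty 2). apply is_lim_seq_INR. apply is_lim_seq_const. reflexivity.
Qed.

Lemma oddR_ge n : INR (n + 1) <= oddR n.
Proof. unfold oddR. rewrite INR_S1. pose proof (pos_INR n). lra. Qed.

Lemma inv_oddR_pow_le x n : (2 <= x)%nat -> / oddR n ^ x <= / INR (n + 1) ^ 2.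
Proof.
  intros Hx. assert (1 <= INR (n + 1)) by (rewrite INR_S1; pose proof (pos_INR n); lra).
  pose proof (oddR_ge n).
  apply Rinv_le_contravar. apply pow_lt; lra.
  apply Rle_trans with (oddR n ^ 2). apply pow_incr; lra.
  apply Rle_pow; [lra|auto].
Qed.

Lemma ex_lam x : (2 <= x)%nat -> ex_series (fun n => / oddR n ^ x).
Proof.
  intros Hx. apply (ex_series_le_R _ _ (fun n => conj (Rlt_le _ _ (Rinv_0_lt_compat _ (pow_lt _ x (oddR_pos n)))) (inv_oddR_pow_le x n Hx))).
  apply ex_series_inv_sq.
Qed.

Lemma lam_eq x : lambda_odd x = Series (fun n => / oddR n ^ x).
Proof. unfold lambda_odd. apply Series_ext. intro n. unfold oddR. rewrite INR_S1. f_equal. f_equal. lra. Qed.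

Lemma lam_is x : (2 <= x)%nat -> is_series (fun n => / oddR n ^ x) (lambda_odd x).
Proof. intros. rewrite lam_eq. apply Series_correct. apply ex_lam; auto. Qed.

Lemma Td_series x y : (2 <= x)%nat -> (2 <= y)%nat ->
  is_series (Td x y) (lambda_odd x * lambda_odd y).
Proof.
  intros Hx Hy. unfold Td.
  apply (is_series_ext (fun n => sum_f_R0 (fun k => / oddR k ^ x * / oddR (n - k) ^ y) n)).
  { intro n. apply sum_eq. intros. rewrite Rinv_mult. auto. }
  apply (is_series_mult (fun n => / oddR n ^ x) (fun n => / oddR n ^ y)).
  apply lam_is; auto. apply lam_is; auto.
  - apply (ex_series_ext (fun n => / oddR n ^ x)). intro n. rewrite Rabs_pos_eq; auto.
    apply Rlt_le, Rinv_0_lt_compat, pow_lt, oddR_pos. apply ex_lam; auto.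
  - apply (ex_series_ext (fun n => / oddR n ^ y)). intro n. rewrite Rabs_pos_eq; auto.
    apply Rlt_le, Rinv_0_lt_compat, pow_lt, oddR_pos. apply ex_lam; auto.
Qed.

Lemma partial_le_lim a l n : (forall k, 0 <= a k) -> is_series a l -> sum_f_R0 a n <= l.
Proof.
  intros Ha H. apply ser_lim in H. apply (is_lim_seq_incr_compare _ _ H).
  intro m. simpl. pose proof (Ha (S m)). lra.
Qed.

Lemma Sodd_eq n x : Sodd (n + 1) x = sum_f_R0 (fun k => / oddR k ^ x) n.
Proof.
  unfold Sodd. rewrite Nat.add_1_r, fsum_sumf. apply sum_eq. intros. unfold oddR.
  rewrite INR_S1. f_equal. f_equal. lra.
Qed.

Lemma Ud_series x y : (2 <= x)%nat -> (2 <= y)%nat ->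
  is_series (Ud x y) (sigma_st y x / 2 ^ y).
Proof.
  intros Hx Hy. unfold sigma_st.
  assert (Ex : ex_series (fun n => Sodd (n + 1) x / INR (n + 1) ^ y)).
  { apply (ex_series_le_R _ (fun n => lambda_odd x * / INR (n + 1) ^ 2)).
    - intro n. rewrite Sodd_eq.
      assert (P1 : 1 <= INR (n + 1)) by (rewrite INR_S1; pose proof (pos_INR n); lra).
      assert (S0 : 0 <= sum_f_R0 (fun k => / oddR k ^ x) n).
      { apply cond_pos_sum. intro; apply Rlt_le, Rinv_0_lt_compat, pow_lt, oddR_pos. }
      assert (S1 : sum_f_R0 (fun k => / oddR k ^ x) n <= lambda_odd x).
      { apply partial_le_lim. intro; apply Rlt_le, Rinv_0_lt_compat, pow_lt, oddR_pos. apply lam_is; auto. }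
      split. unfold Rdiv. apply Rmult_le_pos; auto. apply Rlt_le, Rinv_0_lt_compat, pow_lt; lra.
      unfold Rdiv. apply Rmult_le_compat; auto. apply Rlt_le, Rinv_0_lt_compat, pow_lt; lra.
      apply Rinv_le_contravar. apply pow_lt; lra. apply Rle_pow; auto.
    - destruct ex_series_inv_sq as [l Hl]. exists (lambda_odd x * l).
      apply (is_series_scal_l (lambda_odd x)) in Hl. exact Hl. }
  apply (is_series_ext (fun n => Sodd (n + 1) x / INR (n + 1) ^ y * / 2 ^ y)).
  { intro n. unfold Ud. rewrite Sodd_eq. unfold Rdiv. rewrite Rmult_assoc. rewrite Rmult_comm.
    rewrite scal_sum. apply sum_eq. intros k Hk. unfold cN.
    replace (2 * INR n + 2) with (2 * INR (n + 1)) by (rewrite INR_S1; ring).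
    rewrite Rpow_mult_distr. pose proof (oddR_pos k).
    assert (1 <= INR (n + 1)) by (rewrite INR_S1; pose proof (pos_INR n); lra).
    assert (oddR k ^ x <> 0) by (apply pow_nonzero; lra).
    assert (INR (n+1) ^ y <> 0) by (apply pow_nonzero; lra).
    assert (2 ^ y <> 0) by (apply pow_nonzero; lra).
    field. auto. }
  unfold Rdiv at 2. apply is_series_scal_r. apply Series_correct. auto.
Qed.


Lemma tri_rearr h N :
  sum_f_R0 (fun n => sum_f_R0 (fun k => h k (n - k)%nat) n) N =
  sum_f_R0 (fun k => sum_f_R0 (h k) (N - k)) N.
Proof.
  induction N.
  - simpl. auto.
  - simpl sum_f_R0 at 1. rewrite IHN.
    change (sum_f_R0 (fun k => sum_f_R0 (h k) (S N - k)) (S N)) with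
      (sum_f_R0 (fun k => sum_f_R0 (h k) (S N - k)) N + sum_f_R0 (h (S N)) (S N - S N)).
    rewrite (sum_eq (fun k => sum_f_R0 (h k) (S N - k))
                    (fun k => sum_f_R0 (h k) (N - k) + h k (S N - k)%nat)).
    2:{ intros k Hk. replace (S N - k)%nat with (S (N - k)) by lia. simpl. auto. }
    rewrite sum_plus. replace (S N - S N)%nat with 0%nat by lia. simpl. rewrite Nat.sub_diag. ring.
Qed.

Lemma sum_mono_idx f a b : (forall k, 0 <= f k) -> (a <= b)%nat -> sum_f_R0 f a <= sum_f_R0 f b.
Proof.
  intros Hf Hab. induction Hab. lra. simpl. pose proof (Hf (S m)). lra.
Qed.

Lemma sum_nonneg f n : (forall k, 0 <= f k) -> 0 <= sum_f_R0 f n.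
Proof. intros. apply cond_pos_sum. auto. Qed.

Lemma lim_sum_fin (F : nat -> nat -> R) (L : nat -> R) P :
  (forall k, is_lim_seq (F k) (L k)) ->
  is_lim_seq (fun M => sum_f_R0 (fun k => F k M) P) (sum_f_R0 L P).
Proof.
  intros H. induction P; simpl. apply H.
  apply is_lim_seq_plus'; auto.
Qed.

Lemma diag_series g R L : (forall p m, 0 <= g p m) -> (forall p, is_series (g p) (R p)) ->
  is_series R L -> is_series (fun n => sum_f_R0 (fun k => g k (n - k)%nat) n) L.
Proof.
  intros Hg HR HL.
  assert (R0 : forall p, 0 <= R p).
  { intro p. apply Rle_trans with (sum_f_R0 (g p) 0). simpl; auto. apply partial_le_lim; auto. }
  set (D := fun N => sum_f_R0 (fun n => sum_f_R0 (fun k => g k (n - k)%nat) n) N).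
  assert (Up : forall N, D N <= L).
  { intro N. unfold D. rewrite tri_rearr. apply Rle_trans with (sum_f_R0 R N).
    apply sum_Rle. intros. apply partial_le_lim; auto. apply partial_le_lim; auto. }
  assert (Mono : forall a b, (a <= b)%nat -> D a <= D b).
  { intros a b Hab. unfold D. apply sum_mono_idx; auto. intro; apply sum_nonneg; auto. }
  apply ser_lim. fold D. apply is_lim_seq_Reals. intros eps Heps.
  apply ser_lim, is_lim_seq_Reals in HL.
  destruct (HL (eps / 2) ltac:(lra)) as [P HP].
  assert (HP' := HP P (le_n P)). unfold R_dist in HP'. apply Rabs_def2 in HP'.
  assert (Hfin := lim_sum_fin (fun k M => sum_f_R0 (g k) M) R P).
  assert (Hfin' : is_lim_seq (fun M => sum_f_R0 (fun k => sum_f_R0 (g k) M) P) (sum_f_R0 R P)).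
  { apply Hfin. intro k. apply ser_lim. auto. }
  apply is_lim_seq_Reals in Hfin'.
  destruct (Hfin' (eps / 2) ltac:(lra)) as [M HM].
  assert (HM' := HM M (le_n M)). unfold R_dist in HM'. apply Rabs_def2 in HM'.
  exists (P + M)%nat. intros n Hn. unfold R_dist.
  assert (Low : sum_f_R0 (fun k => sum_f_R0 (g k) M) P <= D n).
  { apply Rle_trans with (D (P + M)%nat); [|apply Mono; lia].
    unfold D. rewrite tri_rearr.
    apply Rle_trans with (sum_f_R0 (fun k => sum_f_R0 (g k) (P + M - k)) P).
    - apply sum_Rle. intros k Hk. apply sum_mono_idx; auto. lia.
    - apply sum_mono_idx; [|lia]. intro; apply sum_nonneg; auto. }
  pose proof (Up n). apply Rabs_def1; lra.
Qed.


Lemma sum_shift f N : sum_f_R0 f (S N) = f O + sum_f_R0 (fun k => f (S k)) N.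
Proof. induction N. simpl. lra.
  change (sum_f_R0 f (S (S N))) with (sum_f_R0 f (S N) + f (S (S N))). rewrite IHN. simpl. lra. Qed.

Lemma ln_le_sub1 z : 0 < z -> ln z <= z - 1.
Proof.
  intros Hz. destruct (Req_dec z 1) as [->|Hne]. rewrite ln_1. lra.
  assert (H := exp_ineq1 (z - 1) ltac:(lra)).
  left. rewrite <- (ln_exp (z - 1)). apply ln_increasing; lra.
Qed.

Lemma ln_diff_bounds x y : 0 < x -> x < y -> (y - x) / y <= ln y - ln x <= (y - x) / x.
Proof.
  intros Hx Hxy. split.
  - assert (H := ln_le_sub1 (x / y) ltac:(apply Rdiv_lt_0_compat; lra)).
    rewrite ln_div in H by lra. replace ((y - x) / y) with (1 - x / y) by (field; lra). lra.
  - assert (H := ln_le_sub1 (y / x) ltac:(apply Rdiv_lt_0_compat; lra)).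
    rewrite ln_div in H by lra. replace ((y - x) / x) with (y / x - 1) by (field; lra). lra.
Qed.

Definition alt (m : nat) : R := / (2 * INR m + 1) - / (2 * INR m + 2).
Definition Qs (N : nat) : R := sum_f_R0 (fun k => / (INR N + INR k + 2)) N.

Lemma alt_Q N : sum_f_R0 alt N = Qs N.
Proof.
  induction N.
  - unfold alt, Qs. simpl. field.
  - change (sum_f_R0 alt (S N)) with (sum_f_R0 alt N + alt (S N)). rewrite IHN.
    set (G := fun j => / (INR N + INR j + 2)).
    assert (H : Qs (S N) = sum_f_R0 G (S (S N)) - G O).
    { rewrite sum_shift. unfold Qs.
      enough (sum_f_R0 (fun k => / (INR (S N) + INR k + 2)) (S N) = sum_f_R0 (fun k => G (S k)) (S N)) by lra.
      apply sum_eq. intros. unfold G. rewrite !S_INR. f_equal. ring. }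
    rewrite H. change (sum_f_R0 G (S (S N))) with (sum_f_R0 G N + G (S N) + G (S (S N))).
    unfold Qs. fold G. unfold G, alt. rewrite !S_INR. simpl INR.
    pose proof (pos_INR N). field. lra.
Qed.

Lemma Qs_bounds N : ln 2 - / (2 * INR N + 3) <= Qs N <= ln 2.
Proof.
  pose proof (pos_INR N). split.
  - apply Rle_trans with (ln (2 * INR N + 3) - ln (INR N + 2)).
    + assert (E : ln 2 = ln (2 * INR N + 4) - ln (INR N + 2)).
      { replace (2 * INR N + 4) with (2 * (INR N + 2)) by ring. rewrite ln_mult by lra. ring. }
      rewrite E. pose proof (ln_diff_bounds (2 * INR N + 3) (2 * INR N + 4) ltac:(lra) ltac:(lra)) as HB.
      replace ((2 * INR N + 4 - (2 * INR N + 3)) / (2 * INR N + 3)) with (/ (2 * INR N + 3)) in HB by (field; lra).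
      lra.
    + set (F := fun k => ln (INR N + INR k + 2)).
      replace (ln (2 * INR N + 3) - ln (INR N + 2)) with (F (S N) - F O).
      2:{ unfold F. rewrite S_INR. simpl INR. f_equal; f_equal; ring. }
      rewrite <- tele_sum. unfold Qs. apply sum_Rle. intros k Hk. unfold F. rewrite S_INR.
      pose proof (pos_INR k).
      pose proof (ln_diff_bounds (INR N + INR k + 2) (INR N + (INR k + 1) + 2) ltac:(lra) ltac:(lra)) as HB.
      replace ((INR N + (INR k + 1) + 2 - (INR N + INR k + 2)) / (INR N + INR k + 2)) with (/ (INR N + INR k + 2)) in HB by (field; lra).
      lra.
  - set (F := fun k => ln (INR N + INR k + 1)).
    replace (ln 2) with (F (S N) - F O).
    2:{ unfold F. rewrite S_INR. simpl INR. replace (INR N + (INR N + 1) + 1) with (2 * (INR N + 1)) by ring.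
        rewrite ln_mult by lra. replace (INR N + 0 + 1) with (INR N + 1) by ring. ring. }
    rewrite <- tele_sum. unfold Qs. apply sum_Rle. intros k Hk. unfold F. rewrite S_INR.
    pose proof (pos_INR k).
    pose proof (ln_diff_bounds (INR N + INR k + 1) (INR N + (INR k + 1) + 1) ltac:(lra) ltac:(lra)) as HB.
    replace ((INR N + (INR k + 1) + 1 - (INR N + INR k + 1)) / (INR N + (INR k + 1) + 1)) with (/ (INR N + INR k + 2)) in HB by (field; lra).
    lra.
Qed.

Lemma lim_inv_lin a b : 0 < a -> 0 < b -> is_lim_seq (fun N => / (a * INR N + b)) 0.
Proof.
  intros Ha Hb. replace (Finite 0) with (Rbar_inv p_infty) by reflexivity.
  apply is_lim_seq_inv; [|discriminate].
  apply (is_lim_seq_plus _ _ p_infty b). 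
  apply (is_lim_seq_ext (fun n => a * INR n)). auto.
  replace p_infty with (Rbar_mult a p_infty). apply is_lim_seq_scal_l. apply is_lim_seq_INR.
  simpl. destruct (Rle_dec 0 a); [|lra]. destruct (Rle_lt_or_eq_dec 0 a r); auto. lra.
  apply is_lim_seq_const. reflexivity.
Qed.

Lemma ln2_series : is_series alt (ln 2).
Proof.
  apply ser_lim. apply (is_lim_seq_ext Qs). intro; symmetry; apply alt_Q.
  apply (is_lim_seq_le_le (fun N => ln 2 - / (2 * INR N + 3)) Qs (fun _ => ln 2)).
  apply Qs_bounds.
  replace (Finite (ln 2)) with (Finite (ln 2 - 0)) by (f_equal; ring).
  apply is_lim_seq_minus'. apply is_lim_seq_const. apply lim_inv_lin; lra.
  apply is_lim_seq_const.
Qed.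


Lemma fsum_tele_shift (F : nat -> R) p a :
  fsum p (fun j => F (a + j)%nat) - fsum p (fun j => F (S (a + j))) = F a - F (a + p)%nat.
Proof.
  induction p; simpl.
  - rewrite Nat.add_0_r. ring.
  - replace (a + S p)%nat with (S (a + p)) by lia. lra.
Qed.

Lemma lim_fsum (F : nat -> nat -> R) (L : nat -> R) p :
  (forall j, is_lim_seq (F j) (L j)) ->
  is_lim_seq (fun N => fsum p (fun j => F j N)) (fsum p L).
Proof.
  intros H. induction p; simpl. apply is_lim_seq_const.
  apply is_lim_seq_plus'; auto.
Qed.

Lemma H_row p : is_series (fun m => / INR (m + 1) - / INR (m + p + 1)) (Hn p).
Proof.
  set (F := fun m => / INR (m + 1)).
  apply ser_lim.
  apply (is_lim_seq_ext (fun N => fsum p F - fsum p (fun j => F (S N + j)%nat))).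
  { intro N. symmetry. induction N.
    - assert (H := fsum_tele_shift F p 0). simpl plus in H.
      transitivity (F O - F p). 
      { simpl sum_f_R0. unfold F. replace (0 + p + 1)%nat with (p + 1)%nat by lia. reflexivity. }
      symmetry. exact H.
    - change (sum_f_R0 (fun m => / INR (m + 1) - / INR (m + p + 1)) (S N)) with
        (sum_f_R0 (fun m => / INR (m + 1) - / INR (m + p + 1)) N + (/ INR (S N + 1) - / INR (S N + p + 1))).
      rewrite IHN. assert (H := fsum_tele_shift F p (S N)).
      transitivity (fsum p F - fsum p (fun j => F (S N + j)%nat) + (F (S N) - F (S N + p)%nat)).
      { unfold F. reflexivity. }
      rewrite <- H. change (fun j => F (S (S N + j))) with (fun j => F (S (S N) + j)%nat). ring. }
  replace (Finite (Hn p)) with (Finite (fsum p F - fsum p (fun _ => 0))).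
  2:{ f_equal. assert (Z : forall q, fsum q (fun _ => 0) = 0) by (induction q; simpl; lra).
      rewrite Z. unfold Hn, F. ring. }
  apply is_lim_seq_minus'. apply is_lim_seq_const.
  apply lim_fsum. intro j. unfold F.
  apply (is_lim_seq_ext (fun N => / (1 * INR N + (INR j + 2)))).
  intro N. f_equal. rewrite !plus_INR, S_INR. simpl. ring.
  apply lim_inv_lin. lra. pose proof (pos_INR j). lra.
Qed.

Lemma gE_row K p : is_series (gE K p) (/ oddR p ^ K * (ln 2 + Hn p / 2)).
Proof.
  unfold gE.
  enough (H : is_series (fun m => / oddR m - / (2 * INR p + 2 * INR m + 2)) (ln 2 + Hn p / 2)).
  { apply (is_series_scal_l (/ oddR p ^ K)) in H. exact H. }
  apply (is_series_ext (fun m => alt m + / 2 * (/ INR (m + 1) - / INR (m + p + 1)))).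
  { intro m. unfold alt, oddR. rewrite !plus_INR. simpl INR. pose proof (pos_INR m). pose proof (pos_INR p).
    match goal with |- ?a = ?b => change (@eq R a b) end. field. repeat split; lra. }
  replace (ln 2 + Hn p / 2) with (ln 2 + / 2 * Hn p) by field.
  assert (H2 := H_row p). apply (is_series_scal_l (/ 2)) in H2.
  apply (is_series_plus alt _ _ _ ln2_series H2).
Qed.

Lemma Hn_bounds p : 0 <= Hn p <= INR p.
Proof.
  induction p. unfold Hn; simpl; lra.
  unfold Hn in *. simpl fsum. rewrite S_INR.
  assert (0 < INR (p + 1)) by (rewrite INR_S1; pose proof (pos_INR p); lra).
  assert (/ INR (p + 1) <= 1).
  { rewrite <- Rinv_1. apply Rinv_le_contravar. lra. rewrite INR_S1. pose proof (pos_INR p); lra. }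
  pose proof (Rinv_0_lt_compat _ H). lra.
Qed.

Lemma E_series K : (3 <= K)%nat ->
  is_series (fun n => sum_f_R0 (fun k => gE K k (n - k)%nat) n)
    (ln 2 * lambda_odd K + / 2 * Series (fun n => Hn (n + 1) / (2 * INR (n + 1) + 1) ^ K)).
Proof.
  intros HK.
  apply (diag_series (gE K) (fun p => / oddR p ^ K * (ln 2 + Hn p / 2))).
  - intros p m. unfold gE. apply Rmult_le_pos. apply Rlt_le, Rinv_0_lt_compat, pow_lt, oddR_pos.
    unfold oddR. pose proof (pos_INR p); pose proof (pos_INR m).
    assert (/ (2 * INR p + 2 * INR m + 2) <= / (2 * INR m + 1)) by (apply Rinv_le_contravar; lra). lra.
  - apply gE_row.
  - set (h := fun p => Hn p / oddR p ^ K).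
    assert (Eh : ex_series h).
    { apply (ex_series_le_R _ (fun n => / oddR n ^ (K - 1))).
      - intro n. unfold h. pose proof (Hn_bounds n). pose proof (oddR_pos n).
        assert (INR n <= oddR n) by (unfold oddR; lra).
        destruct K as [|K']; [lia|]. replace (S K' - 1)%nat with K' by lia. rewrite pow_succ.
        assert (0 < oddR n ^ K') by (apply pow_lt; lra).
        split. unfold Rdiv. apply Rmult_le_pos. lra. apply Rlt_le, Rinv_0_lt_compat. nra.
        unfold Rdiv. rewrite Rinv_mult. rewrite <- Rmult_assoc.
        rewrite <- (Rmult_1_l (/ oddR n ^ K')) at 2. apply Rmult_le_compat_r. apply Rlt_le, Rinv_0_lt_compat; lra.
        apply (Rmult_le_reg_r (oddR n)); [lra|]. rewrite Rmult_assoc, Rinv_l by lra. lra.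
      - apply ex_lam. lia. }
    assert (SH : Series h = Series (fun n => Hn (n + 1) / (2 * INR (n + 1) + 1) ^ K)).
    { rewrite Series_incr_1 by auto. unfold h at 1. unfold Hn at 1. simpl fsum. unfold Rdiv at 1. rewrite Rmult_0_l, Rplus_0_l.
      apply Series_ext. intro n. unfold h, oddR. rewrite Nat.add_1_r. auto. }
    rewrite <- SH.
    apply (is_series_ext (fun p => ln 2 * / oddR p ^ K + / 2 * h p)).
    { intro p. unfold h. match goal with |- ?a = ?b => change (@eq R a b) end. field. apply pow_nonzero. pose proof (oddR_pos p); lra. }
    assert (H1 := lam_is K ltac:(lia)). apply (is_series_scal_l (ln 2)) in H1.
    assert (H2 := Series_correct _ Eh). apply (is_series_scal_l (/ 2)) in H2.
    apply (is_series_plus _ _ _ _ H1 H2).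
Qed.


Lemma diag_final m q n : (-1) ^ (S q) = 1 ->
  fsum m (fun i => Binomial.C (q + S i) (S i) * Ud (S q + S i) (S m - i) n) +
  fsum q (fun j => (-1) ^ j * Binomial.C (S m + j) j * Td (S q - j) (S (S m) + j) n) =
  Binomial.C (S m + q) q * sum_f_R0 (fun k => gE (S (S m) + q) k (n - k)%nat) n.
Proof.
  intros Hq. assert (D := diag_id (S m) q n Hq).
  rewrite fsum_shift in D. rewrite Nat.add_0_r, C_n_0, Nat.sub_0_r, Nat.add_0_r in D.
  change (fsum (S m) (fun j => Binomial.C (q + S j) (S j) * Ud (S q + S j) (S (S m) - S j) n))
    with (fsum m (fun j => Binomial.C (q + S j) (S j) * Ud (S q + S j) (S (S m) - S j) n) +
          Binomial.C (q + S m) (S m) * Ud (S q + S m) (S (S m) - S m) n) in D.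
  change (fsum (S q) (fun j => (-1) ^ j * Binomial.C (S m + j) j * Td (S q - j) (S (S m) + j) n))
    with (fsum q (fun j => (-1) ^ j * Binomial.C (S m + j) j * Td (S q - j) (S (S m) + j) n) +
          (-1) ^ q * Binomial.C (S m + q) q * Td (S q - q) (S (S m) + q) n) in D.
  replace (S (S m) - S m)%nat with 1%nat in D by lia.
  replace (S q - q)%nat with 1%nat in D by lia.
  replace (S q + S m)%nat with (S (S m) + q)%nat in D by lia.
  rewrite (Td_swap 1) in D.
  assert (Hm1 : (-1) ^ q = -1). { simpl in Hq. lra. }
  assert (HC : Binomial.C (q + S m) (S m) = Binomial.C (S m + q) q).
  { rewrite (pascal_step1 (S m + q) q) by lia. f_equal; lia. }
  rewrite Hm1, HC in D.
  assert (E := E_id (S (S m) + q) n).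
  replace (fsum m (fun i => Binomial.C (q + S i) (S i) * Ud (S q + S i) (S m - i) n))
    with (fsum m (fun j => Binomial.C (q + S j) (S j) * Ud (S q + S j) (S (S m) - S j) n)) by reflexivity.
  nra.
Qed.

Lemma key m q : (-1) ^ (S q) = 1 -> (1 <= q)%nat ->
  fsum m (fun i => Binomial.C (q + S i) (S i) * (sigma_st (S m - i) (S q + S i) / 2 ^ (S m - i))) +
  fsum q (fun j => (-1) ^ j * Binomial.C (S m + j) j * (lambda_odd (S q - j) * lambda_odd (S (S m) + j)))
  = Binomial.C (S m + q) q * (ln 2 * lambda_odd (S (S m) + q) +
      / 2 * Series (fun n => Hn (n + 1) / (2 * INR (n + 1) + 1) ^ (S (S m) + q))).
Proof.
  intros Hq Hq1.
  set (u := fun n => fsum m (fun i => Binomial.C (q + S i) (S i) * Ud (S q + S i) (S m - i) n) +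
     fsum q (fun j => (-1) ^ j * Binomial.C (S m + j) j * Td (S q - j) (S (S m) + j) n)).
  assert (H1 : is_series u (fsum m (fun i => Binomial.C (q + S i) (S i) * (sigma_st (S m - i) (S q + S i) / 2 ^ (S m - i))) +
    fsum q (fun j => (-1) ^ j * Binomial.C (S m + j) j * (lambda_odd (S q - j) * lambda_odd (S (S m) + j))))).
  { apply (is_series_plus (fun n => fsum m (fun i => Binomial.C (q + S i) (S i) * Ud (S q + S i) (S m - i) n))
                          (fun n => fsum q (fun j => (-1) ^ j * Binomial.C (S m + j) j * Td (S q - j) (S (S m) + j) n))).
    - apply (is_series_fsum m (fun i n => Binomial.C (q + S i) (S i) * Ud (S q + S i) (S m - i) n)).
      intros i Hi. assert (H := Ud_series (S q + S i) (S m - i) ltac:(lia) ltac:(lia)).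
      apply (is_series_scal_l (Binomial.C (q + S i) (S i))) in H. exact H.
    - apply (is_series_fsum q (fun j n => (-1) ^ j * Binomial.C (S m + j) j * Td (S q - j) (S (S m) + j) n)).
      intros j Hj. assert (H := Td_series (S q - j) (S (S m) + j) ltac:(lia) ltac:(lia)).
      apply (is_series_scal_l ((-1) ^ j * Binomial.C (S m + j) j)) in H. exact H. }
  assert (H2 := E_series (S (S m) + q) ltac:(lia)).
  apply (is_series_scal_l (Binomial.C (S m + q) q)) in H2.
  apply (is_series_ext _ u) in H2.
  2:{ intro n. unfold u. rewrite diag_final by auto. reflexivity. }
  apply is_series_unique in H1. apply is_series_unique in H2. rewrite <- H1. exact H2.
Qed.

Theorem mainTheorem11 (s r : nat) (hs : (2 <= s)%nat) (hr : (1 <= r)%nat) :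
  fsum (s - 2) (fun k => let i := (k + 1)%nat in
      2 ^ (i - 1) * Binomial.C (2 * r + i - 1)%nat i
        * sigma_st (s - i)%nat (2 * r + i)%nat)
  + 2 ^ (s - 1) * fsum (2 * r - 1) (fun j =>
      (-1) ^ j * Binomial.C (s + j - 1)%nat j * lambda_odd (s + j)%nat
        * lambda_odd (2 * r - j)%nat)
  - 2 ^ (s - 2) * Binomial.C (s + 2 * r - 2)%nat (s - 1)%nat
      * Series (fun n => Hn (n + 1) / (2 * INR (n + 1) + 1) ^ (s + 2 * r - 1))
  - 2 ^ (s - 1) * Binomial.C (s + 2 * r - 2)%nat (s - 1)%nat
      * lambda_odd (s + 2 * r - 1)%nat * ln 2
  = 0.
Proof.
  destruct s as [|[|m]]; try lia.
  assert (Hq : (2 * r)%nat = S (2 * r - 1)) by lia.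
  set (q := (2 * r - 1)%nat) in *. rewrite Hq. clearbody q.
  assert (Hm1 : (-1) ^ (S q) = 1) by (rewrite <- Hq; apply pow_1_even).
  assert (K := key m q Hm1 ltac:(lia)).
  replace (S (S m) - 2)%nat with m by lia.
  replace (S (S m) - 1)%nat with (S m) by lia.
  replace (S (S m) + S q - 2)%nat with (S m + q)%nat by lia.
  replace (S (S m) + S q - 1)%nat with (S (S m) + q)%nat by lia.
  assert (HC : Binomial.C (S m + q) (S m) = Binomial.C (S m + q) q).
  { rewrite (pascal_step1 (S m + q) q) by lia. f_equal; lia. }
  rewrite HC.
  assert (E1 : fsum m (fun k => let i := (k + 1)%nat in 2 ^ (i - 1) * Binomial.C (S q + i - 1) i *
        sigma_st (S (S m) - i) (S q + i)) =
      2 ^ (S m) * fsum m (fun i => Binomial.C (q + S i) (S i) * (sigma_st (S m - i) (S q + S i) / 2 ^ (S m - i)))).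
  { rewrite <- fsum_scal. apply fsum_ext. intros k Hk. cbv zeta.
    replace (k + 1 - 1)%nat with k by lia. replace (S q + (k + 1) - 1)%nat with (q + S k)%nat by lia.
    replace (k + 1)%nat with (S k) by lia. replace (S (S m) - S k)%nat with (S m - k)%nat by lia.
    replace (2 ^ S m) with (2 ^ (S m - k) * 2 ^ k) by (rewrite <- pow_add; f_equal; lia).
    assert (2 ^ (S m - k) <> 0) by (apply pow_nonzero; lra). field. auto. }
  assert (E2 : fsum q (fun j => (-1) ^ j * Binomial.C (S (S m) + j - 1) j * lambda_odd (S (S m) + j) *
        lambda_odd (S q - j)) =
      fsum q (fun j => (-1) ^ j * Binomial.C (S m + j) j * (lambda_odd (S q - j) * lambda_odd (S (S m) + j)))).
  { apply fsum_ext. intros j Hj. replace (S (S m) + j - 1)%nat with (S m + j)%nat by lia. ring. }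
  rewrite E1, E2. rewrite pow_succ.
  replace (2 ^ m * 2 * fsum m (fun i => Binomial.C (q + S i) (S i) * (sigma_st (S m - i) (S q + S i) / 2 ^ (S m - i))))
   with (2 ^ m * 2 * fsum m (fun i => Binomial.C (q + S i) (S i) * (sigma_st (S m - i) (S q + S i) / 2 ^ (S m - i)))) by ring.
  rewrite <- Rmult_plus_distr_l. rewrite K. field.
Qed.
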